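(* Let $g>0$, let $\hat\nu:\mathbb R\to[\nu_0,\nu_1]$ be a stretch-limiting constitutive function as in the context, and let $\epsilon\in(0,1)$. For $\gamma>0$ and $a\in(0,\nu_1)$ let $(\lambda,\mu)$, $\lambda>0$, be the unique solution of $$a\mathbf i+0\,\mathbf k=\int_0^1\frac{\hat\nu(\delta(s))}{\delta(s)}\big(\lambda\mathbf i+(\mu+g\gamma s)\mathbf k\big)\,ds,\qquad \delta(s)=\sqrt{\lambda^2+(\mu+g\gamma s)^2}.$$ Then for all $\gamma>0$ sufficiently small (depending on $\epsilon$ and $\hat\nu$) the following holds. If $$\nu_1-\frac{(g\gamma)^2}{24N_1^2}\big(\nu_1+(2-3\epsilon)\hat\nu_{N^-}(N_1)N_1\big)\le a<\nu_1\frac{2N_1}{g\gamma}\sinh^{-1}\frac{g\gamma}{2N_1},$$ then $\frac{N_1^2-\lambda^2}{(g\gamma)^2}\in(0,\tfrac14)$, i.e. the tensile catenary is a union of an extensible segment and two inextensible segments. Conversely, if $\frac{N_1^2-\lambda^2}{(g\gamma)^2}\in(0,\tfrac14)$, then $$\nu_1-\frac{(g\gamma)^2}{24N_1^2}\big(\nu_1+(2+3\epsilon)\hat\nu_{N^-}(N_1)N_1\big)\le a<\nu_1\frac{2N_1}{g\gamma}\sinh^{-1}\frac{g\gamma}{2N_1}.$$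
   Context: Stretch-limited constitutive function: constants $N_0<0<N_1$, $0<\nu_0<1<\nu_1$ with $\hat\nu(N)=\nu_0$ for $N\le N_0$, $\hat\nu(N)=\nu_1$ for $N\ge N_1$, $\hat\nu\in C^\infty([N_0,N_1];[\nu_0,\nu_1])$, $\hat\nu(0)=1$, $\hat\nu'\ge c>0$ on $[N_0,N_1]$; $\hat\nu_{N^-}(N_1)$ is the left derivative of $\hat\nu$ at $N_1$. The equation describes a tensile uniform catenary (mass $\gamma$ per unit reference length) with supports at $\mathbf 0$ and $a\mathbf i$, tension $N(s)=\delta(s)$, stretch $\hat\nu(\delta(s))$. It is a known fact that for $a\in(0,\nu_1)$ a unique solution with $\lambda>0$ exists, and $\mu=-g\gamma/2$. A segment is inextensible where $\delta\ge N_1$ (stretch $\nu_1$) and extensible where $\delta<N_1$; the condition $\frac{N_1^2-\lambda^2}{(g\gamma)^2}\in(0,1/4)$ is equivalent to $\delta\ge N_1$ on $[0,s_-]\cup[s_+,1]$ and $0<\delta<N_1$ on $(s_-,s_+)$, where $s_\pm=\frac12\pm\frac{1}{g\gamma}\sqrt{N_1^2-\lambda^2}$. *)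

(* Defs.v *)
From Stdlib Require Import Reals Lra.
From Coquelicot Require Import Coquelicot.
Open Scope R_scope.

Definition stretch_limited (nu : R -> R) (N0 N1 nu0 nu1 : R) : Prop :=
  N0 < 0 < N1 /\ 0 < nu0 < 1 /\ 1 < nu1 /\
  (forall N, N <= N0 -> nu N = nu0) /\
  (forall N, N1 <= N -> nu N = nu1) /\
  (forall N, N0 <= N <= N1 -> nu0 <= nu N <= nu1) /\
  nu 0 = 1 /\
  exists F : R -> R,
    (forall (k : nat) (x : R), ex_derive_n F k x) /\
    (forall N, N0 <= N <= N1 -> F N = nu N) /\
    exists c, 0 < c /\ forall N, N0 <= N <= N1 -> c <= Derive F N.

Definition left_derivative (f : R -> R) (x d : R) : Prop :=
  filterlim (fun y => (f y - f x) / (y - x)) (at_left x) (locally d).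

Definition tension (g gam lam mu s : R) : R :=
  sqrt (lam ^ 2 + (mu + g * gam * s) ^ 2).

Definition catenary_solution (nu : R -> R) (g gam a lam mu : R) : Prop :=
  is_RInt (fun s => nu (tension g gam lam mu s) / tension g gam lam mu s * lam)
    0 1 a /\
  is_RInt (fun s => nu (tension g gam lam mu s) / tension g gam lam mu s
                    * (mu + g * gam * s)) 0 1 0.

(* Main.v *)
Require Import Defs.
From Stdlib Require Import Reals Lra Psatz.
From Coquelicot Require Import Coquelicot.
Open Scope R_scope.

Lemma F_mvt (F : R -> R) (y z : R) :
  (forall x, ex_derive F x) -> y <= z ->
  exists xi, y <= xi <= z /\ F z - F y = Derive F xi * (z - y).
Proof.
  intros HF Hyz.
  destruct (MVT_gen F y z (Derive F)) as [xi [Hxi Heq]].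
  - intros x _. apply Derive_correct. apply HF.
  - intros x _. apply continuity_pt_filterlim. exact (ex_derive_continuous F x (HF x)).
  - exists xi. rewrite Rmin_left in Hxi by lra. rewrite Rmax_right in Hxi by lra.
    split; [exact Hxi| exact Heq].
Qed.

Lemma nu_facts (nu : R -> R) (N0 N1 nu0 nu1 : R) :
  stretch_limited nu N0 N1 nu0 nu1 ->
  (forall y, nu0 <= nu y <= nu1) /\
  (forall y z, y <= z -> nu y <= nu z) /\
  (forall y, N1 <= y -> nu y = nu1) /\
  exists c, 0 < c /\ forall y, N0 <= y <= N1 -> c * (N1 - y) <= nu1 - nu y.
Proof.
  intros [HN [Hnu0 [Hnu1 [Hlo [Hhi [Hmid [H0 [F [HFd [HFeq [c [Hc HcD]]]]]]]]]]]].
  assert (HF : forall x, ex_derive F x) by (intro x; exact (HFd 1%nat x)).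
  assert (Hb : forall y, nu0 <= nu y <= nu1).
  { intro y. destruct (Rle_dec y N0). rewrite Hlo by lra; lra.
    destruct (Rle_dec N1 y). rewrite Hhi by lra; lra. apply Hmid; lra. }
  assert (Hm : forall y z, N0 <= y <= z -> z <= N1 -> nu y <= nu z).
  { intros y z Hy Hz. destruct (F_mvt F y z HF) as [xi [Hxi He]]; try lra.
    rewrite <- (HFeq y), <- (HFeq z) by lra.
    assert (c <= Derive F xi) by (apply HcD; lra). nra. }
  split; [exact Hb|]. split.
  { intros y z Hyz.
    destruct (Rle_dec z N0). rewrite !Hlo by lra; lra.
    destruct (Rle_dec N1 y). rewrite !Hhi by lra; lra.
    destruct (Rle_dec y N0). rewrite (Hlo y) by lra. apply Hb.
    destruct (Rle_dec N1 z). rewrite (Hhi z) by lra. apply Hb.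
    apply Hm; lra. }
  split; [exact Hhi|].
  exists c. split; [exact Hc|]. intros y Hy.
  destruct (F_mvt F y N1 HF) as [xi [Hxi He]]; try lra.
  rewrite <- (HFeq y) by lra. rewrite <- (Hhi N1) by lra. rewrite <- (HFeq N1) by lra.
  assert (c <= Derive F xi) by (apply HcD; lra). nra.
Qed.

Lemma left_bounds (nu : R -> R) (N1 nu1 dnu1 : R) :
  left_derivative nu N1 dnu1 -> nu N1 = nu1 ->
  forall eta, 0 < eta -> exists r, 0 < r /\ forall y, N1 - r < y < N1 ->
    (dnu1 - eta) * (N1 - y) < nu1 - nu y < (dnu1 + eta) * (N1 - y).
Proof.
  intros HL HN eta Heta.
  destruct (proj1 (filterlim_locally _ _) HL (mkposreal eta Heta)) as [r Hr].
  exists r. split. apply cond_pos. intros y Hy.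
  assert (Hb : ball N1 r y).
  { change (Rabs (y - N1) < r). rewrite Rabs_left by lra. lra. }
  specialize (Hr y Hb ltac:(lra)).
  change (Rabs ((nu y - nu N1) / (y - N1) - dnu1) < eta) in Hr.
  rewrite HN in Hr.
  set (q := (nu y - nu1) / (y - N1)) in Hr.
  assert (Hq : nu1 - nu y = q * (N1 - y)) by (unfold q; field; lra).
  apply Rabs_def2 in Hr. rewrite Hq. split; nra.
Qed.

Lemma dnu1_pos (nu : R -> R) (N0 N1 nu0 nu1 dnu1 : R) :
  stretch_limited nu N0 N1 nu0 nu1 -> left_derivative nu N1 dnu1 -> 0 < dnu1.
Proof.
  intros Hs HL.
  destruct (nu_facts _ _ _ _ _ Hs) as [_ [_ [Hhi [c [Hc Hcb]]]]].
  assert (HN : N0 < 0 < N1) by apply Hs.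
  assert (forall eta, 0 < eta -> c < dnu1 + eta).
  { intros eta He. destruct (left_bounds nu N1 nu1 dnu1 HL (Hhi N1 (Rle_refl _)) eta He) as [r [Hr Hb]].
    set (y := Rmax N0 (N1 - r/2)).
    assert (N0 <= y) by apply Rmax_l. assert (N1 - r/2 <= y) by apply Rmax_r.
    assert (y < N1). { unfold y. apply Rmax_lub_lt; lra. }
    specialize (Hb y ltac:(lra)). specialize (Hcb y ltac:(lra)). nra. }
  destruct (Rle_dec c dnu1). lra.
  specialize (H ((c - dnu1)/2) ltac:(lra)). lra.
Qed.

Definition dd (lam t : R) := sqrt (lam ^ 2 + t ^ 2).

Lemma dd_pos lam t : 0 < lam -> 0 < dd lam t.
Proof. intro. unfold dd. apply sqrt_lt_R0. nra. Qed.

Lemma dd_sq lam t : dd lam t ^ 2 = lam ^ 2 + t ^ 2.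
Proof. unfold dd. rewrite pow2_sqrt; [ring| nra]. Qed.

Lemma dd_opp lam t : dd lam (- t) = dd lam t.
Proof. unfold dd. f_equal. ring. Qed.

Lemma div_le a b c d : 0 < b -> 0 < d -> a * d <= c * b -> a / b <= c / d.
Proof.
  intros Hb Hd H.
  assert (a / b - c / d = (a * d - c * b) / (b * d)) by (field; lra).
  assert ((a * d - c * b) / (b * d) <= 0).
  { unfold Rdiv. apply Rmult_le_0_r. lra. left. apply Rinv_0_lt_compat. nra. }
  lra.
Qed.

Lemma sq_le a b : 0 <= b -> a ^ 2 <= b ^ 2 -> a <= b.
Proof. intros Hb H. apply Rsqr_incr_0_var; [unfold Rsqr; nra | exact Hb]. Qed.

Lemma dd_mono lam q p : 0 < lam -> q ^ 2 <= p ^ 2 -> dd lam q <= dd lam p.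
Proof. intros Hl H. unfold dd. apply sqrt_le_1_alt. nra. Qed.

Lemma G_mono_nonneg lam q p : 0 < lam -> 0 <= q <= p -> q / dd lam q <= p / dd lam p.
Proof.
  intros Hl Hqp. pose proof (dd_pos lam q Hl). pose proof (dd_pos lam p Hl).
  apply div_le; auto. apply sq_le. nra.
  rewrite !Rpow_mult_distr, !dd_sq. assert (q^2 <= p^2) by nra. assert (0 <= lam^2*(p^2-q^2)) by (apply Rmult_le_pos; nra). nra.
Qed.

Lemma G_mono lam q p : 0 < lam -> q <= p -> q / dd lam q <= p / dd lam p.
Proof.
  intros Hl Hqp. pose proof (dd_pos lam q Hl). pose proof (dd_pos lam p Hl).
  destruct (Rle_dec 0 q). apply G_mono_nonneg; lra.
  destruct (Rle_dec p 0).
  - pose proof (G_mono_nonneg lam (-p) (-q) Hl ltac:(lra)). rewrite !dd_opp in H1.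
    unfold Rdiv in *. lra.
  - apply Rle_trans with 0. unfold Rdiv. apply Rmult_le_0_r. lra. left. apply Rinv_0_lt_compat; lra.
    unfold Rdiv. apply Rmult_le_pos. lra. left. apply Rinv_0_lt_compat; lra.
Qed.

Lemma G_sign lam p : 0 < lam -> 0 <= p -> 0 <= p / dd lam p.
Proof. intros. pose proof (dd_pos lam p H). unfold Rdiv. apply Rmult_le_pos; [lra|left; apply Rinv_0_lt_compat; lra]. Qed.

Lemma G_sign' lam p : 0 < lam -> p <= 0 -> p / dd lam p <= 0.
Proof. intros. pose proof (dd_pos lam p H). unfold Rdiv. apply Rmult_le_0_r; [lra|left; apply Rinv_0_lt_compat; lra]. Qed.

Lemma phi_ineq (nu : R -> R) nu0 lam p q :
  (forall y z, y <= z -> nu y <= nu z) -> (forall y, nu0 <= nu y) -> 0 < lam -> q <= p ->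
  nu0 * (p / dd lam p - q / dd lam q) <=
  nu (dd lam p) / dd lam p * p - nu (dd lam q) / dd lam q * q.
Proof.
  intros Hm Hb Hl Hqp.
  pose proof (dd_pos lam q Hl). pose proof (dd_pos lam p Hl).
  replace (nu (dd lam p) / dd lam p * p) with (nu (dd lam p) * (p / dd lam p)) by (field; lra).
  replace (nu (dd lam q) / dd lam q * q) with (nu (dd lam q) * (q / dd lam q)) by (field; lra).
  pose proof (G_mono lam q p Hl Hqp).
  pose proof (Hb (dd lam p)). pose proof (Hb (dd lam q)).
  set (Gp := p / dd lam p) in *. set (Gq := q / dd lam q) in *.
  destruct (Rle_dec 0 q).
  - assert (nu (dd lam q) <= nu (dd lam p)) by (apply Hm, dd_mono; nra).
    assert (0 <= Gp) by (apply G_sign; lra). nra.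
  - destruct (Rle_dec 0 p).
    + assert (0 <= Gp) by (apply G_sign; lra). assert (Gq <= 0) by (apply G_sign'; lra). nra.
    + assert (nu (dd lam p) <= nu (dd lam q)) by (apply Hm, dd_mono; nra).
      assert (Gq <= 0) by (apply G_sign'; lra). nra.
Qed.

Lemma pos2 lam t : 0 < lam -> 0 < lam * (lam * 1) + t * (t * 1).
Proof. intro. rewrite !Rmult_1_r. assert (0 < lam*lam) by (apply Rmult_lt_0_compat; lra). assert (0 <= t*t) by apply Rle_0_sqr. lra. Qed.
Lemma pos2' lam t : 0 < lam -> 0 < lam ^ 2 + t ^ 2.
Proof. intro. simpl. apply pos2; auto. Qed.

Lemma cont_of_der (f : R -> R) x : ex_derive f x -> continuous f x.
Proof. intro H. exact (@ex_derive_continuous R_AbsRing R_NormedModule f x H). Qed.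

Lemma G_int lam mu x nu0 : 0 < lam -> 0 < x ->
  is_RInt (fun s => nu0 * ((mu + x * s) / dd lam (mu + x * s) + (mu + x * (1 - s)) / dd lam (mu + x * (1 - s)))) 0 1
    (nu0 * (2 * (dd lam (mu + x) - dd lam mu) / x)).
Proof.
  intros Hl Hx.
  set (F := fun s => nu0 * ((dd lam (mu + x * s) - dd lam (mu + x * (1 - s))) / x)).
  assert (Hv : nu0 * (2 * (dd lam (mu + x) - dd lam mu) / x) = minus (F 1) (F 0)).
  { unfold F, minus, plus, opp; simpl. replace (mu + x * 1) with (mu + x) by ring.
    replace (mu + x * (1 - 1)) with mu by ring. replace (mu + x * 0) with mu by ring.
    replace (mu + x * (1 - 0)) with (mu + x) by ring. field. lra. }
  rewrite Hv. apply (@is_RInt_derive R_CompleteNormedModule F).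
  - intros s _. unfold F, dd. auto_derive.
    all: repeat split; try (apply pos2; exact Hl).
    assert (0 < sqrt (lam ^ 2 + (mu + x * s) ^ 2)) by (apply sqrt_lt_R0; apply pos2'; exact Hl).
    assert (0 < sqrt (lam ^ 2 + (mu + x * (1 - s)) ^ 2)) by (apply sqrt_lt_R0; apply pos2'; exact Hl).
    replace (lam * (lam * 1) + (mu + x * s) * ((mu + x * s) * 1)) with (lam ^ 2 + (mu + x * s) ^ 2) by ring.
    replace (lam * (lam * 1) + (mu + x * (1 + - s)) * ((mu + x * (1 + - s)) * 1)) with (lam ^ 2 + (mu + x * (1 - s)) ^ 2) by ring.
    field. lra.
  - intros s _. apply cont_of_der. unfold dd. auto_derive.
    all: repeat split; try (apply pos2; exact Hl).
    all: apply Rgt_not_eq; apply sqrt_lt_R0; apply pos2; exact Hl.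
Qed.

Lemma is_RInt_val (f : R -> R) a b (l l' : R) : is_RInt f a b l -> l = l' -> is_RInt f a b l'.
Proof. intros H E; subst; exact H. Qed.

Lemma mu_half (nu : R -> R) nu0 lam mu x :
  (forall y z, y <= z -> nu y <= nu z) -> (forall y, nu0 <= nu y) -> 0 < nu0 ->
  0 < lam -> 0 < x ->
  is_RInt (fun s => nu (dd lam (mu + x * s)) / dd lam (mu + x * s) * (mu + x * s)) 0 1 0 ->
  mu = - x / 2.
Proof.
  intros Hm Hb Hn0 Hl Hx H.
  set (Phi := fun t => nu (dd lam t) / dd lam t * t).
  set (f := fun s => Phi (mu + x * s)).
  assert (H0 : is_RInt f 0 1 0) by exact H.
  assert (H1 : is_RInt (fun s => Phi (mu + x * (1 - s))) 0 1 0).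
  { assert (Hs : is_RInt f (-1 * 0 + 1) (-1 * 1 + 1) (opp 0)).
    { replace (-1 * 0 + 1) with 1 by ring. replace (-1 * 1 + 1) with 0 by ring.
      apply (@is_RInt_swap R_NormedModule). exact H0. }
    pose proof (@is_RInt_comp_lin R_NormedModule f (-1) 1 0 1 (opp 0) Hs) as H2.
    pose proof (@is_RInt_scal R_NormedModule _ _ _ (-1) _ H2) as H3.
    assert (H4 : is_RInt (fun y : R => scal (-1) (scal (-1) (f (-1 * y + 1)))) 0 1 0).
    { eapply is_RInt_val. exact H3. unfold scal, opp; simpl. unfold mult; simpl. ring. }
    eapply is_RInt_ext. 2: exact H4.
    intros s _. unfold f, scal; simpl. unfold mult; simpl.
    replace (mu + x * (-1 * s + 1)) with (mu + x * (1 - s)) by ring. ring. }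
  assert (Hsum : is_RInt (fun s => Phi (mu + x * s) + Phi (mu + x * (1 - s))) 0 1 0).
  { pose proof (@is_RInt_plus R_NormedModule _ _ _ _ _ _ H0 H1) as H2.
    eapply is_RInt_val. exact H2. unfold plus; simpl; ring. }
  pose proof (G_int lam mu x nu0 Hl Hx) as HG.
  set (V := nu0 * (2 * (dd lam (mu + x) - dd lam mu) / x)) in HG.
  assert (Phi_odd : forall t, Phi (- t) = - Phi t).
  { intro t. unfold Phi. rewrite dd_opp. field. pose proof (dd_pos lam t Hl). lra. }
  assert (G_odd : forall t, - t / dd lam (- t) = - (t / dd lam t)).
  { intro t. rewrite dd_opp. field. pose proof (dd_pos lam t Hl). lra. }
  destruct (Rtotal_order (2 * mu + x) 0) as [Hc | [Hc | Hc]].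
  -
    assert (Hle : 0 <= V).
    { refine (is_RInt_le _ _ 0 1 0 V Rle_0_1 Hsum HG _).
      intros s _.
      pose proof (phi_ineq nu nu0 lam (- (mu + x * s)) (mu + x * (1 - s)) Hm Hb Hl ltac:(lra)) as P.
      fold (Phi (- (mu + x * s))) in P. fold (Phi (mu + x * (1 - s))) in P.
      rewrite Phi_odd, G_odd in P. lra. }
    assert (dd lam (mu + x) < dd lam mu).
    { unfold dd. apply sqrt_lt_1_alt. split. apply Rlt_le, pos2'; auto. nra. }
    unfold V in Hle. assert (0 < 2 / x * nu0) by (apply Rmult_lt_0_compat; [apply Rdiv_lt_0_compat|]; lra).
    assert (V = 2 / x * nu0 * (dd lam (mu + x) - dd lam mu)) by (unfold V; field; lra).
    unfold V in *. nra.
  - lra.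
  - assert (Hle : V <= 0).
    { refine (is_RInt_le _ _ 0 1 V 0 Rle_0_1 HG Hsum _).
      intros s _.
      pose proof (phi_ineq nu nu0 lam (mu + x * (1 - s)) (- (mu + x * s)) Hm Hb Hl ltac:(lra)) as P.
      fold (Phi (- (mu + x * s))) in P. fold (Phi (mu + x * (1 - s))) in P.
      rewrite Phi_odd, G_odd in P. lra. }
    assert (dd lam mu < dd lam (mu + x)).
    { unfold dd. apply sqrt_lt_1_alt. split. apply Rlt_le, pos2'; auto. nra. }
    assert (0 < 2 / x * nu0) by (apply Rmult_lt_0_compat; [apply Rdiv_lt_0_compat|]; lra).
    assert (V = 2 / x * nu0 * (dd lam (mu + x) - dd lam mu)) by (unfold V; field; lra).
    nra.
Qed.

Lemma arcsinh_opp y : arcsinh (- y) = - arcsinh y.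
Proof.
  rewrite <- (sinh_arcsinh y) at 1.
  replace (- sinh (arcsinh y)) with (sinh (- arcsinh y)).
  apply arcsinh_sinh.
  unfold sinh. rewrite Ropp_involutive. field.
Qed.

Lemma is_derive_val (f : R -> R) s (l l' : R) : is_derive f s l -> l = l' -> is_derive f s l'.
Proof. intros H E; subst; exact H. Qed.

Lemma I_asinh N1 x : 0 < N1 -> 0 < x ->
  is_RInt (fun s => N1 / sqrt (N1 ^ 2 + (- x / 2 + x * s) ^ 2)) 0 1
    (2 * N1 / x * arcsinh (x / (2 * N1))).
Proof.
  intros HN Hx.
  set (F := fun s => N1 / x * arcsinh ((- x / 2 + x * s) / N1)).
  assert (Hv : 2 * N1 / x * arcsinh (x / (2 * N1)) = minus (F 1) (F 0)).
  { unfold F, minus, plus, opp; simpl.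
    replace ((- x / 2 + x * 1) / N1) with (x / (2 * N1)) by (field; lra).
    replace ((- x / 2 + x * 0) / N1) with (- (x / (2 * N1))) by (field; lra).
    rewrite arcsinh_opp. field. lra. }
  rewrite Hv. apply (@is_RInt_derive R_CompleteNormedModule F).
  - intros s _. unfold F.
    set (y := (- x / 2 + x * s) / N1).
    assert (Ha : is_derive arcsinh y (/ sqrt (y ^ 2 + 1))) by (apply is_derive_Reals, derivable_pt_lim_arcsinh).
    assert (Hg : is_derive (fun s => (- x / 2 + x * s) / N1) s (x / N1)).
    { auto_derive. auto. field. lra. }
    pose proof (is_derive_comp arcsinh (fun s => (- x / 2 + x * s) / N1) s _ _ Ha Hg) as Hc.
    pose proof (is_derive_scal _ s (N1 / x) _ Hc) as Hd.
    eapply is_derive_val. exact Hd.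
    unfold scal; simpl; unfold mult; simpl.
    assert (E : sqrt (N1 ^ 2 + (- x / 2 + x * s) ^ 2) = N1 * sqrt (y ^ 2 + 1)).
    { replace (N1 ^ 2 + (- x / 2 + x * s) ^ 2) with (N1 ^ 2 * (y ^ 2 + 1)) by (unfold y; field; lra).
      rewrite sqrt_mult_alt by nra. rewrite sqrt_pow2 by lra. reflexivity. }
    replace (y * (y * 1) + 1) with (y ^ 2 + 1) by ring. replace (N1 * (N1 * 1) + (- x / 2 + x * s) * ((- x / 2 + x * s) * 1)) with (N1 ^ 2 + (- x / 2 + x * s) ^ 2) by ring. rewrite E. assert (0 < sqrt (y ^ 2 + 1)) by (apply sqrt_lt_R0; nra).
    field. split; lra.
  - intros s _. apply cont_of_der. auto_derive.
    assert (P := pos2 N1 (-x/2+x*s) HN). split; [exact P|]. split; [apply Rgt_not_eq, sqrt_lt_R0; exact P | auto].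
Qed.

Lemma I_poly x A B C :
  is_RInt (fun s => A + B * (- x / 2 + x * s) ^ 2 + C * (- x / 2 + x * s) ^ 4) 0 1
    (A + B * x ^ 2 / 12 + C * x ^ 4 / 80).
Proof.
  set (F := fun s => A * s + B * x ^ 2 * (s - 1/2) ^ 3 / 3 + C * x ^ 4 * (s - 1/2) ^ 5 / 5).
  assert (Hv : A + B * x ^ 2 / 12 + C * x ^ 4 / 80 = minus (F 1) (F 0)).
  { unfold F, minus, plus, opp; simpl. field. }
  rewrite Hv. apply (@is_RInt_derive R_CompleteNormedModule F).
  - intros s _. unfold F. auto_derive. auto. field.
  - intros s _. apply cont_of_der. auto_derive. auto.
Qed.

Lemma sqrt_sq_pos a : 0 < a -> sqrt a ^ 2 = a.
Proof. intro. rewrite pow2_sqrt; lra. Qed.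

Lemma h_mono y1 y2 u : 0 < y1 <= y2 -> 0 <= u -> y1 / sqrt (y1 ^ 2 + u) <= y2 / sqrt (y2 ^ 2 + u).
Proof.
  intros Hy Hu.
  assert (P1 : 0 < sqrt (y1 ^ 2 + u)) by (apply sqrt_lt_R0; nra).
  assert (P2 : 0 < sqrt (y2 ^ 2 + u)) by (apply sqrt_lt_R0; nra).
  apply div_le; auto. apply sq_le. apply Rmult_le_pos; lra.
  rewrite !Rpow_mult_distr, !sqrt_sq_pos by nra.
  assert (y1 ^ 2 <= y2 ^ 2) by nra. assert (0 <= u * (y2^2 - y1^2)) by (apply Rmult_le_pos; lra). nra.
Qed.

Lemma ratio_le1 y u : 0 < y -> 0 <= u -> 0 <= y / sqrt (y ^ 2 + u) <= 1.
Proof.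
  intros Hy Hu. assert (P : 0 < sqrt (y ^ 2 + u)) by (apply sqrt_lt_R0; nra).
  split. apply Rlt_le, Rdiv_lt_0_compat; lra.
  assert (y <= sqrt (y ^ 2 + u)).
  { apply sq_le. lra. rewrite sqrt_sq_pos by nra. lra. }
  apply Rmult_le_reg_r with (sqrt (y ^ 2 + u)); auto.
  unfold Rdiv. rewrite Rmult_assoc, Rinv_l by lra. lra.
Qed.

Lemma ratio_sq y u : 0 < y -> 0 <= u -> (y / sqrt (y ^ 2 + u)) ^ 2 = y ^ 2 / (y ^ 2 + u).
Proof.
  intros. assert (P : 0 < sqrt (y ^ 2 + u)) by (apply sqrt_lt_R0; nra).
  unfold Rdiv. rewrite Rpow_mult_distr, pow_inv, sqrt_sq_pos by nra. reflexivity.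
Qed.

Lemma pw_F1 (nu : R -> R) N1 nu1 lam u :
  (forall y, N1 <= y -> nu y = nu1) -> 0 < N1 -> N1 <= lam -> 0 <= u -> 0 <= nu1 ->
  nu1 * (N1 / sqrt (N1 ^ 2 + u)) <= nu (sqrt (lam ^ 2 + u)) / sqrt (lam ^ 2 + u) * lam.
Proof.
  intros Hhi HN Hl Hu Hn.
  assert (lam <= sqrt (lam ^ 2 + u)).
  { apply sq_le. apply sqrt_pos. rewrite sqrt_sq_pos by nra. lra. }
  rewrite Hhi by lra.
  assert (P : 0 < sqrt (lam ^ 2 + u)) by (apply sqrt_lt_R0; nra).
  replace (nu1 / sqrt (lam ^ 2 + u) * lam) with (nu1 * (lam / sqrt (lam ^ 2 + u))) by (field; lra).
  apply Rmult_le_compat_l; auto. apply h_mono; lra.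
Qed.

Lemma pw_C1 (nu : R -> R) N1 nu1 lam x u :
  (forall y, 0 <= nu y <= nu1) -> 0 < lam < N1 -> 0 <= u <= x ^ 2 / 4 ->
  nu (sqrt (lam ^ 2 + u)) / sqrt (lam ^ 2 + u) * lam
    + nu1 * ((N1 ^ 2 - lam ^ 2) / (2 * (N1 ^ 2 + x ^ 2 / 4) ^ 2)) * u
  <= nu1 * (N1 / sqrt (N1 ^ 2 + u)).
Proof.
  intros Hb Hl Hu.
  assert (P : 0 < sqrt (lam ^ 2 + u)) by (apply sqrt_lt_R0; nra).
  replace (nu (sqrt (lam ^ 2 + u)) / sqrt (lam ^ 2 + u) * lam) with
    (nu (sqrt (lam ^ 2 + u)) * (lam / sqrt (lam ^ 2 + u))) by (field; lra).
  set (A := N1 / sqrt (N1 ^ 2 + u)). set (B := lam / sqrt (lam ^ 2 + u)).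
  pose proof (ratio_le1 lam u ltac:(lra) ltac:(lra)) as RB. fold B in RB.
  pose proof (ratio_le1 N1 u ltac:(lra) ltac:(lra)) as RA. fold A in RA.
  pose proof (h_mono lam N1 u ltac:(lra) ltac:(lra)) as HAB. fold A B in HAB.
  pose proof (ratio_sq lam u ltac:(lra) ltac:(lra)) as SB. fold B in SB.
  pose proof (ratio_sq N1 u ltac:(lra) ltac:(lra)) as SA. fold A in SA.
  pose proof (Hb (sqrt (lam ^ 2 + u))).
  set (K := (N1 ^ 2 - lam ^ 2) / (2 * (N1 ^ 2 + x ^ 2 / 4) ^ 2)).
  assert (HD : A ^ 2 - B ^ 2 = u * (N1 ^ 2 - lam ^ 2) / ((N1 ^ 2 + u) * (lam ^ 2 + u))).
  { rewrite SA, SB. field. split; nra. }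
  assert (HD2 : 2 * K * u <= A ^ 2 - B ^ 2).
  { rewrite HD. unfold K.
    apply Rle_trans with (u * (N1 ^ 2 - lam ^ 2) / ((N1 ^ 2 + x ^ 2 / 4) ^ 2)).
    right. assert (0 < N1 ^ 2 + x ^ 2 / 4) by nra. field. lra.
    unfold Rdiv. rewrite !(Rmult_assoc u). apply Rmult_le_compat_l. lra.
    apply Rmult_le_compat_l. nra.
    apply Rinv_le_contravar. apply Rmult_lt_0_compat; nra.
    simpl. rewrite Rmult_1_r. apply Rmult_le_compat; nra. }
  assert (HK : 0 <= K).
  { unfold K. apply Rle_mult_inv_pos. nra. assert (0 < N1 ^ 2 + x ^ 2 / 4) by nra. apply Rmult_lt_0_compat. lra. apply pow_lt. lra. }
  assert (B + K * u <= A) by nra.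
  assert (nu (sqrt (lam ^ 2 + u)) * B <= nu1 * B) by (apply Rmult_le_compat_r; lra).
  assert (0 <= nu1) by (specialize (Hb 0); lra).
  nra.
Qed.

Lemma div_le_r a b c : 0 < b -> a <= c * b -> a / b <= c.
Proof. intros Hb H. apply Rmult_le_reg_r with b; auto. unfold Rdiv. rewrite Rmult_assoc, Rinv_l by lra. lra. Qed.

Lemma div_ge_r a b c : 0 < b -> c * b <= a -> c <= a / b.
Proof. intros Hb H. apply Rmult_le_reg_r with b; auto. unfold Rdiv. rewrite Rmult_assoc, Rinv_l by lra. lra. Qed.

Lemma pw_F2 (nu : R -> R) N1 nu1 dnu1 eta r lam x u L :
  (forall y z, y <= z -> nu y <= nu z) -> (forall y, 0 <= nu y) -> nu N1 = nu1 ->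
  (forall y, N1 - r < y < N1 -> (dnu1 - eta) * (N1 - y) < nu1 - nu y) ->
  0 < N1 -> 0 < dnu1 - eta -> 0 < lam -> L = N1 ^ 2 - x ^ 2 / 4 -> 0 < L -> lam ^ 2 <= L ->
  N1 - sqrt L < r -> 0 <= u <= x ^ 2 / 4 ->
  nu (sqrt (lam ^ 2 + u)) / sqrt (lam ^ 2 + u) * lam <=
  (nu1 - (dnu1 - eta) * (x ^ 2 / 4 - u) / (2 * N1)) * (1 - u / (2 * N1 ^ 2)).
Proof.
  intros Hm Hb HN1 Hleft HN Hde Hl HL HL0 HlL Hr Hu.
  set (ls := sqrt L) in *. assert (Hls : ls ^ 2 = L) by (apply sqrt_sq_pos; auto).
  assert (Hls0 : 0 < ls) by (apply sqrt_lt_R0; auto).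
  set (ds := sqrt (L + u)). assert (Hds : ds ^ 2 = L + u) by (apply sqrt_sq_pos; lra).
  assert (Hds0 : 0 < ds) by (apply sqrt_lt_R0; lra).
  set (dl := sqrt (lam ^ 2 + u)). assert (Hdl : dl ^ 2 = lam ^ 2 + u) by (apply sqrt_sq_pos; nra).
  assert (Hdl0 : 0 < dl) by (apply sqrt_lt_R0; nra).
  assert (Hdsls : ls <= ds) by (apply sq_le; lra).
  assert (HdsN : ds <= N1) by (apply sq_le; nra).
  assert (Hdlds : dl <= ds) by (apply sq_le; lra).
  assert (Hlls : lam <= ls) by (apply sq_le; lra).
  assert (Hnu : nu dl <= nu ds) by (apply Hm; auto).
  assert (Hrat : lam / dl <= ls / ds).
  { unfold dl, ds. rewrite <- Hls. apply h_mono; lra. }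
  assert (Hnuds : nu ds <= nu1 - (dnu1 - eta) * (N1 - ds)).
  { destruct (Rlt_dec ds N1).
    - assert (N1 - r < ds) by lra. specialize (Hleft ds ltac:(lra)). lra.
    - assert (ds = N1) by lra. rewrite H, HN1. lra. }
  assert (HNds : (x ^ 2 / 4 - u) / (2 * N1) <= N1 - ds).
  { apply div_le_r. lra. assert ((N1 - ds) * (N1 + ds) = x ^ 2 / 4 - u) by nra. nra. }
  set (rho := ls / ds) in *.
  pose proof (ratio_le1 ls u Hls0 ltac:(lra)) as Rr. rewrite Hls in Rr. fold ds rho in Rr.
  pose proof (ratio_sq ls u Hls0 ltac:(lra)) as Sr. rewrite Hls in Sr. fold ds rho in Sr.
  set (v := u / N1 ^ 2).
  assert (Huv : u = v * N1 ^ 2) by (unfold v; field; lra).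
  assert (Hm2 : 1 - u / (2 * N1 ^ 2) = 1 - v / 2) by (unfold v; field; lra).
  assert (Hv1 : 0 <= v <= 1).
  { split. unfold v. apply Rle_mult_inv_pos; nra. apply div_le_r; nra. }
  assert (Hrho : rho <= 1 - u / (2 * N1 ^ 2)).
  { rewrite Hm2. apply sq_le. lra. rewrite Sr. apply div_le_r. lra.
    assert (L + u <= N1 ^ 2) by nra.
    assert (HH : (1 - v / 2) ^ 2 * (L + u) >= (1 - v) * (L + u)) by nra.
    assert ((1 - v) * (L + u) - L = u * (N1 ^ 2 - L - u) / N1 ^ 2) by (rewrite Huv; field; lra).
    assert (0 <= u * (N1 ^ 2 - L - u) / N1 ^ 2) by (apply Rle_mult_inv_pos; nra).
    lra. }
  replace (nu dl / dl * lam) with (nu dl * (lam / dl)) by (field; lra).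
  assert (Hq0 : 0 <= lam / dl) by (apply Rlt_le, Rdiv_lt_0_compat; lra).
  pose proof (Hb dl). pose proof (Hb ds).
  apply Rle_trans with (nu ds * (lam / dl)). apply Rmult_le_compat_r; lra.
  apply Rle_trans with (nu ds * rho). apply Rmult_le_compat_l; lra.
  apply Rmult_le_compat; try lra.
  assert ((dnu1 - eta) * (x ^ 2 / 4 - u) / (2 * N1) = (dnu1 - eta) * ((x ^ 2 / 4 - u) / (2 * N1))) by (field; lra).
  rewrite H1. assert ((dnu1 - eta) * ((x ^ 2 / 4 - u) / (2 * N1)) <= (dnu1 - eta) * (N1 - ds)) by (apply Rmult_le_compat_l; lra).
  lra.
Qed.

Lemma pw_C2 (nu : R -> R) N1 nu1 dnu1 eta r lam x u L :
  (forall y z, y <= z -> nu y <= nu z) -> (forall y, 0 <= nu y) -> nu N1 = nu1 ->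
  (forall y, N1 - r < y < N1 -> nu1 - nu y < (dnu1 + eta) * (N1 - y)) ->
  0 < N1 -> 0 < dnu1 + eta -> 0 < lam -> L = N1 ^ 2 - x ^ 2 / 4 -> 0 < L -> L <= lam ^ 2 ->
  x ^ 2 / 4 <= L ->
  N1 - sqrt L < r -> 0 <= u <= x ^ 2 / 4 ->
  nu1 - nu1 * (u / L) / 2 - nu1 * (u / L) ^ 2 / 2 - (dnu1 + eta) * (N1 / (N1 ^ 2 + L)) * (x ^ 2 / 4 - u)
  <= nu (sqrt (lam ^ 2 + u)) / sqrt (lam ^ 2 + u) * lam.
Proof.
  intros Hm Hb HN1 Hleft HN Hde Hl HL HL0 HlL HxL Hr Hu.
  set (ls := sqrt L) in *. assert (Hls : ls ^ 2 = L) by (apply sqrt_sq_pos; auto).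
  assert (Hls0 : 0 < ls) by (apply sqrt_lt_R0; auto).
  set (ds := sqrt (L + u)) in *. assert (Hds : ds ^ 2 = L + u) by (apply sqrt_sq_pos; lra).
  assert (Hds0 : 0 < ds) by (apply sqrt_lt_R0; lra).
  set (dl := sqrt (lam ^ 2 + u)) in *. assert (Hdl : dl ^ 2 = lam ^ 2 + u) by (apply sqrt_sq_pos; nra).
  assert (Hdl0 : 0 < dl) by (apply sqrt_lt_R0; nra).
  assert (Hdsls : ls <= ds) by (apply sq_le; lra).
  assert (HdsN : ds <= N1) by (apply sq_le; nra).
  assert (HlsN : ls <= N1) by (apply sq_le; nra).
  assert (Hdlds : ds <= dl) by (apply sq_le; lra).
  assert (Hlls : ls <= lam) by (apply sq_le; lra).
  assert (Hnu : nu ds <= nu dl) by (apply Hm; auto).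
  assert (Hrat : ls / ds <= lam / dl).
  { unfold dl, ds. rewrite <- Hls. apply h_mono; lra. }
  set (D := dnu1 + eta) in *.
  assert (Hnuds : nu1 - D * (N1 - ds) <= nu ds).
  { destruct (Rlt_dec ds N1).
    - assert (N1 - r < ds) by lra. specialize (Hleft ds ltac:(lra)). lra.
    - assert (ds = N1) by lra. rewrite H, HN1. lra. }
  set (w := x ^ 2 / 4 - u) in *.
  assert (HNds : N1 - ds <= N1 / (N1 ^ 2 + L) * w).
  { assert (E : N1 / (N1 ^ 2 + L) * w = N1 * w / (N1 ^ 2 + L)) by (field; lra). rewrite E.
    apply div_ge_r. lra. assert ((N1 - ds) * (N1 + ds) = w) by (unfold w; nra).
    assert (L <= ls * N1) by nra.
    assert (N1 ^ 2 + L <= N1 * (N1 + ds)) by nra. nra. }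
  set (rho := ls / ds) in *.
  pose proof (ratio_le1 ls u Hls0 ltac:(lra)) as Rr. rewrite Hls in Rr. fold ds rho in Rr.
  pose proof (ratio_sq ls u Hls0 ltac:(lra)) as Sr. rewrite Hls in Sr. fold ds rho in Sr.
  set (z := u / L) in *.
  assert (Huz : u = z * L) by (unfold z; field; lra).
  assert (Hz : 0 <= z <= 1).
  { split. unfold z. apply Rle_mult_inv_pos; lra. apply div_le_r; lra. }
  set (mm := 1 - z / 2 - z ^ 2 / 2).
  assert (Hmm : mm = (1 - z) * (1 + z / 2)) by (unfold mm; field).
  assert (Hmm0 : 0 <= mm) by (rewrite Hmm; apply Rmult_le_pos; lra).
  assert (Hmm1 : mm <= 1) by (unfold mm; nra).
  assert (Hrho : mm <= rho).
  { apply sq_le. lra. rewrite Sr. apply div_ge_r. lra.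
    rewrite Huz. replace (L + z * L) with (L * (1 + z)) by ring.
    assert (A1 : (1 - z) * (1 + z / 2) ^ 2 <= 1) by nra.
    assert (A2 : (1 - z) * (1 + z) <= 1) by nra.
    assert (A3 : mm ^ 2 * (1 + z) <= 1).
    { rewrite Hmm. replace (((1 - z) * (1 + z / 2)) ^ 2 * (1 + z)) with
        (((1 - z) * (1 + z / 2) ^ 2) * ((1 - z) * (1 + z))) by ring.
      assert (0 <= (1 - z) * (1 + z / 2) ^ 2) by (apply Rmult_le_pos; nra).
      assert (0 <= (1 - z) * (1 + z)) by nra. nra. }
    nra. }
  replace (nu dl / dl * lam) with (nu dl * (lam / dl)) by (field; lra).
  assert (Hq0 : 0 <= rho) by lra.
  pose proof (Hb dl). pose proof (Hb ds).
  apply Rle_trans with (nu ds * rho).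
  2: { apply Rle_trans with (nu ds * (lam / dl)). apply Rmult_le_compat_l; lra. apply Rmult_le_compat_r; lra. }
  apply Rle_trans with (nu ds * mm).
  2: { apply Rmult_le_compat_l; lra. }
  assert (Hw : 0 <= w) by (unfold w; lra).
  assert (HB : 0 <= N1 / (N1 ^ 2 + L) * w) by (apply Rmult_le_pos; [apply Rlt_le, Rdiv_lt_0_compat; nra | lra]).
  set (bw := N1 / (N1 ^ 2 + L) * w) in *.
  assert (nu1 - D * bw <= nu ds) by nra.
  assert ((nu1 - D * bw) * mm <= nu ds * mm) by (apply Rmult_le_compat_r; lra).
  assert (E : nu1 - nu1 * z / 2 - nu1 * z ^ 2 / 2 - D * (N1 / (N1 ^ 2 + L)) * w = nu1 * mm - D * bw) by (unfold mm, bw; field; lra).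
  rewrite E. assert (0 <= D * bw * (1 - mm)) by (apply Rmult_le_pos; [apply Rmult_le_pos|]; lra). nra.
Qed.

Lemma alg_F2 nu1 dnu1 eps N1 x eta e :
  0 < N1 -> 0 < dnu1 -> 0 < eps < 1 -> 0 < x -> x ^ 2 < 20 * eps * N1 ^ 2 ->
  eta = eps * dnu1 / 2 -> e = (dnu1 - eta) / (2 * N1) ->
  (nu1 - e * x ^ 2 / 4) + (e - (nu1 - e * x ^ 2 / 4) / (2 * N1 ^ 2)) * x ^ 2 / 12
    + (- e / (2 * N1 ^ 2)) * x ^ 4 / 80
  < nu1 - (x ^ 2) / (24 * N1 ^ 2) * (nu1 + (2 - 3 * eps) * dnu1 * N1).
Proof.
  intros HN Hd He Hx Hx2 Heta Hee. subst eta e.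
  match goal with |- ?l < ?r => assert (E : r - l = x ^ 2 / (480 * N1 ^ 3) * (40 * eps * dnu1 * N1 ^ 2 - (dnu1 - eps * dnu1 / 2) * x ^ 2)) by (field; lra) end.
  assert (0 < x ^ 2 / (480 * N1 ^ 3)) by (apply Rdiv_lt_0_compat; [nra| apply Rmult_lt_0_compat; [lra| apply pow_lt; lra]]).
  assert (0 < 40 * eps * dnu1 * N1 ^ 2 - (dnu1 - eps * dnu1 / 2) * x ^ 2).
  { assert (0 < eps * dnu1 / 2 * x ^ 2) by (apply Rmult_lt_0_compat; nra).
    assert (dnu1 * x ^ 2 <= dnu1 * (20 * eps * N1 ^ 2)) by (apply Rmult_le_compat_l; lra).
    assert (0 < eps * dnu1 * N1 ^ 2) by (apply Rmult_lt_0_compat; nra). nra. }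
  assert (0 < x ^ 2 / (480 * N1 ^ 3) * (40 * eps * dnu1 * N1 ^ 2 - (dnu1 - eps * dnu1 / 2) * x ^ 2)) by (apply Rmult_lt_0_compat; lra).
  lra.
Qed.

Lemma alg_C2 nu1 dnu1 eps N1 x L Q D beta :
  0 < N1 -> 0 < nu1 -> 0 < dnu1 -> 0 < eps < 1 -> 0 < x -> x ^ 2 < N1 ^ 2 ->
  L = N1 ^ 2 - x ^ 2 / 4 ->
  Q = nu1 / (72 * N1 ^ 4) + nu1 / (90 * N1 ^ 4) + dnu1 / (56 * N1 ^ 3) ->
  x ^ 2 * Q < eps * dnu1 / (12 * N1) ->
  D = dnu1 + eps * dnu1 / 2 -> beta = N1 / (N1 ^ 2 + L) ->
  nu1 - (x ^ 2) / (24 * N1 ^ 2) * (nu1 + (2 + 3 * eps) * dnu1 * N1) <=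
  (nu1 - D * beta * x ^ 2 / 4) + (- nu1 / (2 * L) + D * beta) * x ^ 2 / 12
    + (- nu1 / (2 * L ^ 2)) * x ^ 4 / 80.
Proof.
  intros HN Hn Hd He Hx Hx2 HL HQ HxQ HD Hbeta.
  assert (HL0 : 3 * N1 ^ 2 / 4 <= L) by lra.
  assert (HL1 : 0 < L) by nra.
  assert (HNL : 0 < N1 ^ 2 + L) by nra.
  set (T1 := nu1 / (24 * L) - nu1 / (24 * N1 ^ 2)).
  set (T2 := nu1 * x ^ 2 / (160 * L ^ 2)).
  set (T3 := D * beta / 6 - D / (12 * N1)).
  assert (E : (nu1 - D * beta * x ^ 2 / 4) + (- nu1 / (2 * L) + D * beta) * x ^ 2 / 12
    + (- nu1 / (2 * L ^ 2)) * x ^ 4 / 80 - (nu1 - (x ^ 2) / (24 * N1 ^ 2) * (nu1 + (2 + 3 * eps) * dnu1 * N1))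
    = x ^ 2 * (eps * dnu1 / (12 * N1) - T1 - T2 - T3)).
  { unfold T1, T2, T3. rewrite HD. field. repeat split; lra. }
  assert (HT1 : T1 <= x ^ 2 * (nu1 / (72 * N1 ^ 4))).
  { assert (T1 = nu1 * x ^ 2 / (96 * L * N1 ^ 2)) by (unfold T1; rewrite HL; field; split; lra).
    rewrite H. apply div_le_r. nra.
    assert (0 <= nu1 * x ^ 2) by nra.
    assert (E2 : x ^ 2 * (nu1 / (72 * N1 ^ 4)) * (96 * L * N1 ^ 2) = nu1 * x ^ 2 * (96 * L / (72 * N1 ^ 2))) by (field; lra).
    rewrite E2. assert (1 <= 96 * L / (72 * N1 ^ 2)) by (apply div_ge_r; nra). nra. }
  assert (HT2 : T2 <= x ^ 2 * (nu1 / (90 * N1 ^ 4))).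
  { unfold T2. apply div_le_r. nra.
    assert (0 <= nu1 * x ^ 2) by nra.
    assert (E2 : x ^ 2 * (nu1 / (90 * N1 ^ 4)) * (160 * L ^ 2) = nu1 * x ^ 2 * (160 * L ^ 2 / (90 * N1 ^ 4))) by (field; lra).
    rewrite E2. assert (9 * N1 ^ 4 / 16 <= L ^ 2) by nra.
    assert (1 <= 160 * L ^ 2 / (90 * N1 ^ 4)) by (apply div_ge_r; nra). nra. }
  assert (HT3 : T3 <= x ^ 2 * (dnu1 / (56 * N1 ^ 3))).
  { assert (T3 = D * x ^ 2 / (48 * N1 * (N1 ^ 2 + L))) by (unfold T3; rewrite Hbeta, HL; field; split; nra).
    rewrite H. apply div_le_r. nra.
    assert (D <= 3 / 2 * dnu1) by nra.
    assert (7 * N1 ^ 2 / 4 <= N1 ^ 2 + L) by lra.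
    assert (E2 : x ^ 2 * (dnu1 / (56 * N1 ^ 3)) * (48 * N1 * (N1 ^ 2 + L)) = x ^ 2 * dnu1 * (48 * (N1 ^ 2 + L) / (56 * N1 ^ 2))) by (field; lra).
    rewrite E2. assert (3 / 2 <= 48 * (N1 ^ 2 + L) / (56 * N1 ^ 2)) by (apply div_ge_r; nra).
    assert (0 <= x ^ 2 * dnu1) by nra. assert (0 <= x^2) by nra. nra. }
  assert (0 <= eps * dnu1 / (12 * N1) - T1 - T2 - T3).
  { rewrite HQ in HxQ. nra. }
  assert (0 <= x ^ 2 * (eps * dnu1 / (12 * N1) - T1 - T2 - T3)) by (apply Rmult_le_pos; nra).
  lra.
Qed.

Lemma is_RInt_scal' (f : R -> R) a b k l : is_RInt f a b l -> is_RInt (fun s => k * f s) a b (k * l).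
Proof. intro H. exact (@is_RInt_scal R_NormedModule f a b k l H). Qed.

Lemma is_RInt_plus' (f g : R -> R) a b l1 l2 : is_RInt f a b l1 -> is_RInt g a b l2 ->
  is_RInt (fun s => f s + g s) a b (l1 + l2).
Proof. intros H1 H2. exact (@is_RInt_plus R_NormedModule f g a b l1 l2 H1 H2). Qed.

Lemma u_bound x s : 0 < s < 1 -> 0 <= (- x / 2 + x * s) ^ 2 <= x ^ 2 / 4.
Proof. intros. split. apply pow2_ge_0. replace (- x / 2 + x * s) with (x * (s - 1/2)) by field.
  rewrite Rpow_mult_distr. assert ((s - 1/2)^2 <= 1/4) by nra. assert (0 <= x^2) by nra. nra. Qed.

Lemma frac_iff N1 lam x : 0 < x ->
  (0 < (N1 ^ 2 - lam ^ 2) / x ^ 2 < 1 / 4 <-> lam ^ 2 < N1 ^ 2 /\ N1 ^ 2 - x ^ 2 / 4 < lam ^ 2).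
Proof.
  intro Hx. assert (Hx2 : 0 < x ^ 2) by nra.
  assert (E : (N1 ^ 2 - lam ^ 2) = (N1 ^ 2 - lam ^ 2) / x ^ 2 * x ^ 2) by (field; lra).
  split.
  - intros [H1 H2]. split.
    + assert (0 < (N1 ^ 2 - lam ^ 2) / x ^ 2 * x ^ 2) by (apply Rmult_lt_0_compat; lra). rewrite <- E in H. lra.
    + assert ((N1 ^ 2 - lam ^ 2) / x ^ 2 * x ^ 2 < 1/4 * x ^ 2) by (apply Rmult_lt_compat_r; lra). rewrite <- E in H. lra.
  - intros [H1 H2]. split.
    + apply Rdiv_lt_0_compat; lra.
    + apply Rmult_lt_reg_r with (x ^ 2). lra. rewrite <- E. lra.
Qed.

Theorem proposition4p3
  (g : R) (nu : R -> R) (N0 N1 nu0 nu1 dnu1 eps : R) :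
  0 < g ->
  stretch_limited nu N0 N1 nu0 nu1 ->
  left_derivative nu N1 dnu1 ->
  0 < eps < 1 ->
  exists gam0 : R, 0 < gam0 /\
    forall gam a lam mu : R,
      0 < gam < gam0 ->
      0 < a < nu1 ->
      0 < lam ->
      catenary_solution nu g gam a lam mu ->
      ((nu1 - (g * gam) ^ 2 / (24 * N1 ^ 2) * (nu1 + (2 - 3 * eps) * dnu1 * N1) <= a /\
        a < nu1 * (2 * N1 / (g * gam)) * arcsinh (g * gam / (2 * N1))) ->
       0 < (N1 ^ 2 - lam ^ 2) / (g * gam) ^ 2 < 1 / 4) /\
      (0 < (N1 ^ 2 - lam ^ 2) / (g * gam) ^ 2 < 1 / 4 ->
       nu1 - (g * gam) ^ 2 / (24 * N1 ^ 2) * (nu1 + (2 + 3 * eps) * dnu1 * N1) <= a /\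
       a < nu1 * (2 * N1 / (g * gam)) * arcsinh (g * gam / (2 * N1))).
Proof.
  intros Hg Hs HL Heps.
  destruct (nu_facts _ _ _ _ _ Hs) as [Hb [Hm [Hhi _]]].
  assert (HN : N0 < 0 < N1) by apply Hs.
  assert (Hnu0 : 0 < nu0 < 1) by apply Hs.
  assert (Hnu1 : 1 < nu1) by apply Hs.
  assert (Hd : 0 < dnu1) by exact (dnu1_pos _ _ _ _ _ _ Hs HL).
  assert (HN1 : nu N1 = nu1) by (apply Hhi; lra).
  set (eta := eps * dnu1 / 2).
  assert (Heta : 0 < eta) by (unfold eta; nra).
  destruct (left_bounds nu N1 nu1 dnu1 HL HN1 eta Heta) as [r [Hr Hlb]].
  set (Q := nu1 / (72 * N1 ^ 4) + nu1 / (90 * N1 ^ 4) + dnu1 / (56 * N1 ^ 3)).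
  assert (HQ : 0 < Q).
  { unfold Q. assert (0 < N1 ^ 3) by (apply pow_lt; lra). assert (0 < N1 ^ 4) by (apply pow_lt; lra).
    assert (0 < nu1 / (72 * N1 ^ 4)) by (apply Rdiv_lt_0_compat; lra).
    assert (0 < nu1 / (90 * N1 ^ 4)) by (apply Rdiv_lt_0_compat; lra).
    assert (0 < dnu1 / (56 * N1 ^ 3)) by (apply Rdiv_lt_0_compat; lra). lra. }
  set (X := Rmin (Rmin (N1 ^ 2) (2 * N1 * r)) (Rmin (20 * eps * N1 ^ 2) (eps * dnu1 / (12 * N1 * Q)))).
  assert (HX : 0 < X).
  { unfold X. assert (0 < N1 ^ 2) by (apply pow_lt; lra).
    repeat apply Rmin_glb_lt.
    - lra.
    - apply Rmult_lt_0_compat; lra.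
    - apply Rmult_lt_0_compat; [|lra]. apply Rmult_lt_0_compat; lra.
    - apply Rdiv_lt_0_compat. apply Rmult_lt_0_compat; lra. apply Rmult_lt_0_compat; lra. }
  exists (sqrt X / g). split. apply Rdiv_lt_0_compat; [apply sqrt_lt_R0|]; lra.
  intros gam a lam mu Hgam Ha Hl [Hc1 Hc2].
  set (x := g * gam) in *.
  assert (Hx : 0 < x) by (unfold x; nra).
  assert (HxX : x ^ 2 < X).
  { assert (x < sqrt X).
    { unfold x. apply Rmult_lt_reg_l with (/ g). apply Rinv_0_lt_compat; lra.
      replace (/ g * (g * gam)) with gam by (field; lra). unfold Rdiv in Hgam. lra. }
    pose proof (sqrt_sq_pos X HX). nra. }
  assert (Hx1 : x ^ 2 < N1 ^ 2).
  { eapply Rlt_le_trans. exact HxX. unfold X. eapply Rle_trans; apply Rmin_l. }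
  assert (Hx2 : x ^ 2 < 2 * N1 * r).
  { eapply Rlt_le_trans. exact HxX. unfold X. eapply Rle_trans. apply Rmin_l. apply Rmin_r. }
  assert (Hx3 : x ^ 2 < 20 * eps * N1 ^ 2).
  { eapply Rlt_le_trans. exact HxX. unfold X. eapply Rle_trans. apply Rmin_r. apply Rmin_l. }
  assert (Hx4 : x ^ 2 * Q < eps * dnu1 / (12 * N1)).
  { assert (x ^ 2 < eps * dnu1 / (12 * N1 * Q)).
    { eapply Rlt_le_trans. exact HxX. unfold X. eapply Rle_trans. apply Rmin_r. apply Rmin_r. }
    apply Rmult_lt_reg_r with (/ Q). apply Rinv_0_lt_compat; lra.
    replace (x ^ 2 * Q * / Q) with (x ^ 2) by (field; lra).
    replace (eps * dnu1 / (12 * N1) * / Q) with (eps * dnu1 / (12 * N1 * Q)) by (field; lra). lra. }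
  assert (Hmu : mu = - x / 2).
  { apply (mu_half nu nu0 lam mu x Hm (fun y => proj1 (Hb y)) ltac:(lra) Hl Hx). exact Hc2. }
  subst mu. clear Hc2.
  set (L := N1 ^ 2 - x ^ 2 / 4).
  assert (HL0 : 0 < L) by (unfold L; nra).
  assert (HsL : N1 - sqrt L < r).
  { assert (sqrt L <= N1) by (apply sq_le; [lra| rewrite sqrt_sq_pos by lra; unfold L; nra]).
    assert (L <= sqrt L * N1).
    { assert (sqrt L * sqrt L = L) by (apply sqrt_sqrt; lra).
      assert (0 <= sqrt L) by apply sqrt_pos. nra. }
    assert (N1 * (N1 - sqrt L) <= x ^ 2 / 4) by (unfold L in *; nra).
    nra. }
  set (U := nu1 * (2 * N1 / x) * arcsinh (x / (2 * N1))).
  assert (HU : is_RInt (fun s => nu1 * (N1 / sqrt (N1 ^ 2 + (- x / 2 + x * s) ^ 2))) 0 1 U).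
  { unfold U. rewrite Rmult_assoc. apply is_RInt_scal'. apply I_asinh; lra. }
  assert (Ha' : is_RInt (fun s => nu (sqrt (lam ^ 2 + (- x / 2 + x * s) ^ 2)) / sqrt (lam ^ 2 + (- x / 2 + x * s) ^ 2) * lam) 0 1 a) by exact Hc1.
  clear Hc1.
  rewrite frac_iff by exact Hx.
  split.
  - intros [Hlow Hup]. split.
    +
      destruct (Rlt_dec lam N1). nra. exfalso.
      assert (U <= a).
      { refine (is_RInt_le _ _ 0 1 U a Rle_0_1 HU Ha' _).
        intros s Hs01. pose proof (u_bound x s Hs01). apply (pw_F1 nu N1 nu1 lam _ Hhi); lra. }
      lra.
    + destruct (Rlt_dec L (lam ^ 2)). exact r0. exfalso.
      set (e := (dnu1 - eta) / (2 * N1)).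
      pose proof (I_poly x (nu1 - e * x ^ 2 / 4) (e - (nu1 - e * x ^ 2 / 4) / (2 * N1 ^ 2)) (- e / (2 * N1 ^ 2))) as HP.
      assert (a <= (nu1 - e * x ^ 2 / 4) + (e - (nu1 - e * x ^ 2 / 4) / (2 * N1 ^ 2)) * x ^ 2 / 12
                    + (- e / (2 * N1 ^ 2)) * x ^ 4 / 80).
      { refine (is_RInt_le _ _ 0 1 _ _ Rle_0_1 Ha' HP _).
        intros s Hs01. pose proof (u_bound x s Hs01) as Hu.
        eapply Rle_trans.
        apply (pw_F2 nu N1 nu1 dnu1 eta r lam x _ L Hm (fun y => Rle_trans _ _ _ (Rlt_le _ _ (proj1 Hnu0)) (proj1 (Hb y))) HN1);
          try lra; auto.
        - intros y Hy. specialize (Hlb y Hy). lra.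
        - unfold eta; nra.
        - right. unfold e. replace ((- x / 2 + x * s) ^ 4) with (((- x / 2 + x * s) ^ 2) ^ 2) by ring.
          field. lra. }
      pose proof (alg_F2 nu1 dnu1 eps N1 x eta e ltac:(lra) Hd Heps Hx Hx3 eq_refl eq_refl).
      lra.
  - intros [H1 H2]. split.
    + set (D := dnu1 + eta). set (beta := N1 / (N1 ^ 2 + L)).
      pose proof (I_poly x (nu1 - D * beta * x ^ 2 / 4) (- nu1 / (2 * L) + D * beta) (- nu1 / (2 * L ^ 2))) as HP.
      assert ((nu1 - D * beta * x ^ 2 / 4) + (- nu1 / (2 * L) + D * beta) * x ^ 2 / 12
                + (- nu1 / (2 * L ^ 2)) * x ^ 4 / 80 <= a).
      { refine (is_RInt_le _ _ 0 1 _ _ Rle_0_1 HP Ha' _).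
        intros s Hs01. pose proof (u_bound x s Hs01) as Hu.
        eapply Rle_trans. 2: {
        apply (pw_C2 nu N1 nu1 dnu1 eta r lam x _ L Hm (fun y => Rle_trans _ _ _ (Rlt_le _ _ (proj1 Hnu0)) (proj1 (Hb y))) HN1);
          try lra; auto.
        all: try (intros y Hy; specialize (Hlb y Hy); lra).
        all: unfold L; nra. }
        right. unfold D, beta. replace ((- x / 2 + x * s) ^ 4) with (((- x / 2 + x * s) ^ 2) ^ 2) by ring.
        field. split; lra. }
      pose proof (alg_C2 nu1 dnu1 eps N1 x L Q D beta ltac:(lra) ltac:(lra) Hd Heps Hx Hx1 eq_refl eq_refl Hx4 eq_refl eq_refl).
      lra.
    + set (K := (N1 ^ 2 - lam ^ 2) / (2 * (N1 ^ 2 + x ^ 2 / 4) ^ 2)).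
      pose proof (I_poly x 0 (nu1 * K) 0) as HP.
      pose proof (is_RInt_plus' _ _ 0 1 _ _ Ha' HP) as HS.
      assert (a + (0 + nu1 * K * x ^ 2 / 12 + 0 * x ^ 4 / 80) <= U).
      { refine (is_RInt_le _ _ 0 1 _ _ Rle_0_1 HS HU _).
        intros s Hs01. pose proof (u_bound x s Hs01) as Hu.
        eapply Rle_trans. 2: { apply (pw_C1 nu N1 nu1 lam x); try lra; auto.
          intro y. pose proof (Hb y). lra. nra. }
        right. unfold K. ring. }
      assert (0 < K).
      { unfold K. apply Rdiv_lt_0_compat. lra. assert (0 < N1 ^ 2 + x ^ 2 / 4) by nra.
        apply Rmult_lt_0_compat. lra. apply pow_lt. lra. }
      assert (0 < nu1 * K * x ^ 2 / 12) by (assert (0 < x^2) by nra; assert (0 < nu1 * K) by (apply Rmult_lt_0_compat; lra); nra).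
      lra.
Qed.
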